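(* Let $m\ge1$ and $\mathfrak{g}_m=\mathfrak{sl}(2)\ltimes V(m)$. Let $V$ and $W$ be uniserial $\mathfrak{g}_m$-modules with socle decompositions $V=V(a_0)\oplus\cdots\oplus V(a_\ell)$ and $W=V(b_0)\oplus\cdots\oplus V(b_{\ell'})$, where $\ell,\ell'\ge1$. Let $v_0\in V(a_{i_0})\otimes V(b_{j_0})\subset V\otimes W$ be a highest weight vector (for $\mathfrak{sl}(2)$). For $s=0,\dots,m$ let $(e_sv_0)_1$ denote the component of $e_sv_0$ in $V(a_{i_0-1})\otimes V(b_{j_0})$ and $(e_sv_0)_2$ its component in $V(a_{i_0})\otimes V(b_{j_0-1})$ (with respect to the decomposition $V\otimes W=\bigoplus_{i,j}V(a_i)\otimes V(b_j)$; these components are $0$ when $i_0=0$, resp. $j_0=0$). Then: (i) $(e_sv_0)_1=0$ for all $s=0,\dots,m$ if and only if $i_0=0$; (ii) $(e_sv_0)_2=0$ for all $s=0,\dots,m$ if and only if $j_0=0$.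
   Context: $\mathbb{F}$ is a field of characteristic zero; all modules are finite dimensional. $\{e,h,f\}$ is the standard basis of $\mathfrak{sl}(2)$ and $V(a)$ denotes the irreducible $\mathfrak{sl}(2)$-module of highest weight $a\ge0$ (dimension $a+1$). $\mathfrak{g}_m=\mathfrak{sl}(2)\ltimes V(m)$ where $\mathfrak{r}=V(m)$ is an abelian ideal on which $\mathfrak{sl}(2)$ acts as on $V(m)$; $\{e_0,\dots,e_m\}$ is a basis of $\mathfrak{r}=V(m)$ consisting of $h$-weight vectors ($e_s$ of weight $m-2s$). A module is uniserial if it has a unique composition series, i.e. its socle series $0=\mathrm{soc}^0\subset\mathrm{soc}^1\subset\cdots\subset\mathrm{soc}^n=V$ has irreducible factors. A socle decomposition of a uniserial $\mathfrak{g}_m$-module $V$ of composition length $\ell+1$ is a decomposition $V=V(a_0)\oplus\cdots\oplus V(a_\ell)$ into irreducible $\mathfrak{sl}(2)$-submodules such that $\mathrm{soc}^{k}(V)=V(a_0)\oplus\cdots\oplus V(a_{k-1})$ for all $k$ (so $V(a_{k})\cong\mathrm{soc}^{k+1}(V)/\mathrm{soc}^{k}(V)$ and $\mathfrak{r}V(a_k)\subset V(a_0)\oplus\cdots\oplus V(a_{k-1})$). A highest weight vector is a nonzero $h$-eigenvector annihilated by $e$. *)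

(* Defs.v *)
(* Finite-dimensional modules over g_m = sl(2) ⋉ V(m) are
   encoded concretely: a module of dimension n is F^n = 'rV[F]_n, each element
   x of g_m acts by v |-> v *m A_x (right multiplication of row vectors), so
   subspaces are row spaces (mxalgebra, scope %MS). *)
From HB Require Import structures.
From mathcomp Require Import all_boot all_order all_algebra.
From mathcomp Require Import mxtens.
Set Implicit Arguments. Unset Strict Implicit. Unset Printing Implicit Defensive.
Import GRing.Theory.
Local Open Scope ring_scope.

(* Data of a representation of g_m on F^n: matrices for e, h, f of sl(2) and
   for the basis e_0,...,e_m of the abelian ideal r = V(m). *)
Record gmod (F : fieldType) (m n : nat) := GMod {
  gE : 'M[F]_n; gH : 'M[F]_n; gF : 'M[F]_n; gX : 'I_m.+1 -> 'M[F]_n }.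

(* Matrix of the bracket [x,y] for the right-multiplication encoding:
   (v *m A_y) *m A_x = x.(y.v), hence A_[x,y] = A_y A_x - A_x A_y. *)
Definition rbr (F : fieldType) n (Ax Ay : 'M[F]_n) : 'M[F]_n :=
  Ay *m Ax - Ax *m Ay.

Definition is_gmod (F : fieldType) m n (M : gmod F m n) : Prop :=
  [/\ rbr (gH M) (gE M) = (gE M) *+ 2,
      rbr (gH M) (gF M) = - (gF M) *+ 2 &
      rbr (gE M) (gF M) = gH M] /\
  [/\ forall s : 'I_m.+1, rbr (gH M) (gX M s) = (m%:R - (s.*2)%N%:R) *: gX M s,
      forall s : 'I_m.+1,
        rbr (gE M) (gX M s) = (s * (m - s).+1)%N%:R *: gX M (inord s.-1),
      forall s : 'I_m.+1,
        rbr (gF M) (gX M s) = if (s < m)%N then gX M (inord s.+1) else 0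
    & forall s t : 'I_m.+1, rbr (gX M s) (gX M t) = 0].

Definition tens (F : fieldType) m n p (V : gmod F m n) (W : gmod F m p)
  : gmod F m (n * p) :=
  GMod (gE V *t (1%:M : 'M_p) + (1%:M : 'M_n) *t gE W)
       (gH V *t (1%:M : 'M_p) + (1%:M : 'M_n) *t gH W)
       (gF V *t (1%:M : 'M_p) + (1%:M : 'M_n) *t gF W)
       (fun s => gX V s *t (1%:M : 'M_p) + (1%:M : 'M_n) *t gX W s).

Definition sl2_mats (F : fieldType) m n (M : gmod F m n) : seq 'M[F]_n :=
  [:: gE M; gH M; gF M].
Definition g_mats (F : fieldType) m n (M : gmod F m n) : seq 'M[F]_n :=
  sl2_mats M ++ [seq gX M s | s <- enum 'I_m.+1].

Definition stable_all (F : fieldType) n (As : seq 'M[F]_n) (U : 'M[F]_n) :=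
  all (fun A => stablemx U A) As.

Definition simple_over (F : fieldType) n (As : seq 'M[F]_n) (S U : 'M[F]_n)
  : Prop :=
  [/\ stable_all As U, (S < U)%MS &
      forall W : 'M[F]_n, stable_all As W -> (S <= W)%MS -> (W <= U)%MS ->
        (W == S)%MS \/ (W == U)%MS].

(* soc is the socle series: soc 0 = 0 and soc (k+1) is the sum of soc k and
   all submodules U ⊇ soc k with U/soc k simple (i.e. soc(V/soc k) pulled
   back), expressed as a least upper bound of row spaces. *)
Definition is_socle_series (F : fieldType) m n (M : gmod F m n)
  (soc : nat -> 'M[F]_n) : Prop :=
  (soc 0%N == (0 : 'M[F]_n))%MS /\
  forall k : nat,
    [/\ (soc k <= soc k.+1)%MS,
        (forall U, simple_over (g_mats M) (soc k) U -> (U <= soc k.+1)%MS) &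
        (forall Z : 'M[F]_n, (soc k <= Z)%MS ->
           (forall U, simple_over (g_mats M) (soc k) U -> (U <= Z)%MS) ->
           (soc k.+1 <= Z)%MS)].

Definition uniserial (F : fieldType) m n (M : gmod F m n) : Prop :=
  exists soc, is_socle_series M soc /\
  exists N : nat, (soc N == 1%:M)%MS /\
    forall k, (k < N)%N -> simple_over (g_mats M) (soc k) (soc k.+1).

Definition irr_sl2_sub (F : fieldType) m n (M : gmod F m n) (U : 'M[F]_n) :=
  simple_over (sl2_mats M) 0 U.

(* Socle decomposition V = V(a_0) ⊕ ... ⊕ V(a_l), the summand V(a_i) being
   the row space of U i (an irreducible sl(2)-submodule of dimension a_i+1),
   with soc^k(V) = V(a_0) ⊕ ... ⊕ V(a_{k-1}) for all k <= l+1. *)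
Definition socle_decomposition (F : fieldType) m n (M : gmod F m n)
  (l : nat) (a : nat -> nat) (U : nat -> 'M[F]_n) : Prop :=
  [/\ forall i, (i <= l)%N -> irr_sl2_sub M (U i) /\ \rank (U i) = (a i).+1,
      mxdirect (\sum_(i < l.+1) U i),
      (\sum_(i < l.+1) U i == 1%:M)%MS &
      exists soc, is_socle_series M soc /\
        forall k, (k <= l.+1)%N -> (soc k == \sum_(i < k) U i)%MS].

Definition highest_weight (F : fieldType) m n (M : gmod F m n) (v : 'rV[F]_n)
  : Prop :=
  [/\ v != 0, exists c : F, v *m gH M = c *: v & v *m gE M = 0].

(* component of x in the summand U i ⊗ U' j of
   V ⊗ W = ⊕_{i<=l, j<=l'} U i ⊗ U' j (projection along the other summands);
   0 if (i,j) is out of range *)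
Definition tcomp (F : fieldType) n p (l l' : nat)
  (U : nat -> 'M[F]_n) (U' : nat -> 'M[F]_p) (i j : nat) (x : 'rV[F]_(n * p))
  : 'rV[F]_(n * p) :=
  if (i <= l)%N && (j <= l')%N then
    x *m proj_mx (U i *t U' j)
      (\sum_(ij : 'I_l.+1 * 'I_l'.+1 | (ij.1 : nat, ij.2 : nat) != (i, j))
          (U ij.1 *t U' ij.2))%MS
  else 0.

Definition comp1 (F : fieldType) n p l l' (U : nat -> 'M[F]_n)
  (U' : nat -> 'M[F]_p) (i0 j0 : nat) (x : 'rV[F]_(n * p)) :=
  if i0 is i.+1 then tcomp l l' U U' i j0 x else 0.

Definition comp2 (F : fieldType) n p l l' (U : nat -> 'M[F]_n)
  (U' : nat -> 'M[F]_p) (i0 j0 : nat) (x : 'rV[F]_(n * p)) :=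
  if j0 is j.+1 then tcomp l l' U U' i0 j x else 0.

(* Main.v *)
Require Import Defs.
From HB Require Import structures.
From mathcomp Require Import all_boot all_order all_algebra.
From mathcomp Require Import mxtens zify.
Set Implicit Arguments. Unset Strict Implicit. Unset Printing Implicit Defensive.
Import GRing.Theory.
Local Open Scope ring_scope.


Lemma natf_eq (F : fieldType) (hF : [pchar F] =i pred0) i j :
  (i%:R == j%:R :> F) = (i == j).
Proof.
wlog le: i j / (i <= j)%N.
  move=> W; case: (leqP i j) => [/W//|/ltnW/W]; by rewrite eq_sym => ->; rewrite eq_sym.
rewrite -(subnKC le) natrD eq_sym -subr_eq0 addrAC subrr add0r ((pcharf0P F).1 hF).
by rewrite -{2}[i]addn0 eqn_add2l.
Qed.

Lemma nil_ad (F : fieldType) (hF : [pchar F] =i pred0) n (H Y : 'M[F]_n) (c : F) :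
  c != 0 -> Y *m H - H *m Y = c *: Y -> Y ^+ (n * n) = 0.
Proof.
move=> c0 hY.
have key k : Y ^+ k *m H - H *m Y ^+ k = (k%:R * c) *: Y ^+ k.
  elim: k => [|k IH]; first by rewrite expr0 mul1mx mulmx1 subrr mul0r scale0r.
  rewrite exprSr -!mulmxE.
  have -> : Y ^+ k *m Y *m H - H *m (Y ^+ k *m Y) =
     Y ^+ k *m (Y *m H - H *m Y) + (Y ^+ k *m H - H *m Y ^+ k) *m Y.
    by rewrite mulmxBr mulmxBl !mulmxA addrA subrK.
  rewrite hY IH -scalemxAl -scalemxAr -scalerDl mulrSr mulrDl mul1r addrC.
  done.
pose G : 'M[F]_(n * n) := lin_mulmxr H - lin_mulmx H.
have hG (Z : 'M[F]_n) : mxvec Z *m G = mxvec (Z *m H - H *m Z).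
  by rewrite mulmxBr !mul_vec_lin /= linearB.
apply/eqP; apply: contraT => nz.
pose N := (n * n).+1.
have nzk (k : 'I_N) : Y ^+ k != 0.
  apply: contra nz => /eqP Yk.
  have le : (k <= n * n)%N by rewrite -ltnS.
  by rewrite -(subnKC le) exprD Yk mul0r.
pose a (k : 'I_N) := k%:R * c.
have inj_a : {in predT &, injective a}.
  move=> i j _ _ /eqP; rewrite /a -subr_eq0 -mulrBl mulf_eq0 (negbTE c0) orbF.
  by rewrite subr_eq0 natf_eq // => /eqP ij; apply: val_inj.
have dir := mxdirect_sum_eigenspace G inj_a.
have {dir} := mxdirectP dir => /= dir.
have ge1 (k : 'I_N) : (1 <= \rank (eigenspace G (a k)))%N.
  have sub : (mxvec (Y ^+ k) <= eigenspace G (a k))%MS.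
    by apply/eigenspaceP; rewrite hG key linearZ.
  by apply: leq_trans (mxrankS sub); rewrite rank_rV mxvec_eq0 nzk.
have := rank_leq_col (\sum_(k < N) eigenspace G (a k))%MS.
rewrite dir => le.
have : (\sum_(k < N) 1 <= \sum_(k < N) \rank (eigenspace G (a k)))%N.
  by apply: leq_sum => k _; apply: ge1.
rewrite sum1_card card_ord => h.
by have := leq_trans h le; rewrite ltnn.
Qed.


Section Nilp.
Variables (F : fieldType) (hF : [pchar F] =i pred0) (m : nat) (n : nat)
  (M : gmod F m n) (hM : is_gmod M).
Local Notation E := (gE M). Local Notation H := (gH M).
Local Notation Fm := (gF M). Local Notation X := (gX M).

Lemma relHX s : X s *m H - H *m X s = (m%:R - (s.*2)%:R) *: X s.
Proof. by case: hM => _ [h _ _ _]; exact: h. Qed.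
Lemma relEX s : X s *m E - E *m X s = (s * (m - s).+1)%:R *: X (inord s.-1).
Proof. by case: hM => _ [_ h _ _]; exact: h. Qed.
Lemma relFX s : X s *m Fm - Fm *m X s = if (s < m)%N then X (inord s.+1) else 0.
Proof. by case: hM => _ [_ _ h _]; exact: h. Qed.
Lemma relXX s t : X s *m X t = X t *m X s.
Proof. by case: hM => _ [_ _ _ h]; move: (h s t); rewrite /rbr => /eqP; rewrite subr_eq0 => /eqP. Qed.
Lemma relHE : E *m H - H *m E = E *+ 2. Proof. by case: hM => [[h _ _] _]. Qed.
Lemma relHF : Fm *m H - H *m Fm = - Fm *+ 2. Proof. by case: hM => [[_ h _] _]. Qed.
Lemma relEF : Fm *m E - E *m Fm = H. Proof. by case: hM => [[_ _ h] _]. Qed.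

Lemma nilX_ne (s : 'I_m.+1) : m != s.*2 -> X s ^+ (n * n) = 0.
Proof.
move=> ne; apply: (nil_ad hF (H := H) (c := m%:R - (s.*2)%:R)); last exact: relHX.
by rewrite subr_eq0 natf_eq.
Qed.

Inductive inA : 'M[F]_n -> Prop :=
| inA1 : inA 1%:M
| inAX s : inA (X s)
| inAD x y : inA x -> inA y -> inA (x + y)
| inAM x y : inA x -> inA y -> inA (x *m y)
| inAZ (c : F) x : inA x -> inA (c *: x).

Lemma inA_commX x s : inA x -> x *m X s = X s *m x.
Proof.
elim=> {x} [|t|x y _ hx _ hy|x y _ hx _ hy|c x _ hx].
- by rewrite mul1mx mulmx1.
- exact: relXX.
- by rewrite mulmxDl mulmxDr hx hy.
- by rewrite -mulmxA hy !mulmxA hx.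
- by rewrite -scalemxAl hx scalemxAr.
Qed.

Lemma inA_comm x y : inA x -> inA y -> x *m y = y *m x.
Proof.
move=> hx; elim: hx y => {x} [|t|x y _ hx _ hy|x y _ hx _ hy|c x _ hx] z hz.
- by rewrite mul1mx mulmx1.
- by rewrite inA_commX.
- by rewrite mulmxDl mulmxDr hx // hy.
- by rewrite -mulmxA hy // !mulmxA hx.
- by rewrite -scalemxAl hx // scalemxAr.
Qed.

Definition Dr (Y : 'M[F]_n) := Y *m Fm - Fm *m Y.

Lemma DrD x y : Dr (x + y) = Dr x + Dr y.
Proof. by rewrite /Dr mulmxDl mulmxDr opprD addrACA. Qed.
Lemma DrM x y : Dr (x *m y) = Dr x *m y + x *m Dr y.
Proof.
rewrite /Dr mulmxBl mulmxBr !mulmxA.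
by rewrite [RHS]addrC addrA subrK.
Qed.
Lemma DrZ c x : Dr (c *: x) = c *: Dr x.
Proof. by rewrite /Dr -scalemxAl -scalemxAr scalerBr. Qed.
Lemma Dr0 : Dr 0 = 0.
Proof. by rewrite /Dr mul0mx mulmx0 subrr. Qed.

Lemma DrA x : inA x -> inA (Dr x).
Proof.
elim=> {x} [|s|x y _ hx _ hy|x y Ax hx Ay hy|c x _ hx].
- rewrite /Dr mul1mx mulmx1 subrr -(scale0r 1%:M); apply: inAZ; exact: inA1.
- rewrite /Dr relFX; case: ifP => _; first exact: inAX.
  rewrite -(scale0r 1%:M); apply: inAZ; exact: inA1.
- rewrite DrD; exact: inAD.
- by rewrite DrM; apply: inAD; apply: inAM.
- rewrite DrZ; exact: inAZ.
Qed.

Variable t : nat.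
Hypothesis ht : m = t.*2.

Inductive inJ : 'M[F]_n -> Prop :=
| inJ0 : inJ 0
| inJD x y : inJ x -> inJ y -> inJ (x + y)
| inJX y (s : 'I_m.+1) : inA y -> (t < s)%N -> inJ (y *m X s).

Lemma inJ_A x : inJ x -> inA x.
Proof.
elim=> {x} [|x y _ hx _ hy|y s hy _].
- rewrite -(scale0r 1%:M); apply: inAZ; exact: inA1.
- exact: inAD.
- apply: inAM => //; exact: inAX.
Qed.

Lemma inJ_M z x : inA z -> inJ x -> inJ (z *m x).
Proof.
move=> hz; elim=> {x} [|x y _ hx _ hy|y s hy lt].
- rewrite mulmx0; exact: inJ0.
- rewrite mulmxDr; exact: inJD.
- rewrite mulmxA; apply: inJX => //; exact: inAM.
Qed.

Lemma commE (x y : 'M[F]_n) : x *m y = y *m x -> GRing.comm x y.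
Proof. by rewrite /GRing.comm -!mulmxE. Qed.

Lemma inJ_nil x : inJ x -> exists k, x ^+ k = 0.
Proof.
elim=> {x} [|x y hx [k1 h1] hy [k2 h2]|y s hy lt].
- by exists 1%N; rewrite expr1.
- exists (k1 + k2)%N.
  rewrite exprDn_comm; last by apply: commE; apply: inA_comm; apply: inJ_A.
  rewrite big1 // => i _.
  case: (leqP k1 (k1 + k2 - i)) => le.
    by rewrite -(subnKC le) exprD h1 !mul0r mul0rn.
  have le2 : (k2 <= i)%N by move: le (ltn_ord i); lia.
  by rewrite -(subnKC le2) exprD h2 mul0r mulr0 mul0rn.
- exists (n * n)%N.
  rewrite exprMn_comm; last by apply: commE; apply: inA_commX.
  rewrite nilX_ne ?mulr0 //.
  by move: lt; rewrite -!muln2; move: (nat_of_ord s) ht => ss ->; rewrite -!muln2; lia.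
Qed.


Lemma inA_exp x i : inA x -> inA (x ^+ i).
Proof.
move=> hx; elim: i => [|i IH]; first by rewrite expr0; exact: inA1.
by rewrite exprS -mulmxE; apply: inAM.
Qed.

Lemma DrJ x : inJ x -> inJ (Dr x).
Proof.
elim=> {x} [|x y _ hx _ hy|y s hy lt].
- rewrite Dr0; exact: inJ0.
- rewrite DrD; exact: inJD.
- rewrite DrM; apply: inJD; first by apply: inJX => //; apply: DrA.
  rewrite /Dr relFX; case: ifP => sm; last by rewrite mulmx0; exact: inJ0.
  by apply: inJX => //; rewrite inordK //; apply: ltnW.
Qed.

Lemma DrJ_exp x i : inA x -> inJ (Dr x) -> inJ (Dr (x ^+ i)).
Proof.
move=> hx hD; elim: i => [|i IH].
  by rewrite expr0 /Dr mul1mx mulmx1 subrr; exact: inJ0.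
rewrite exprS -mulmxE DrM; apply: inJD; last exact: inJ_M.
rewrite (inA_comm (DrA hx) (inA_exp i hx)); exact: inJ_M (inA_exp i hx) hD.
Qed.

Lemma Dexp x i : inA x -> Dr (x ^+ i.+1) = i.+1%:R *: (x ^+ i *m Dr x).
Proof.
move=> hx; elim: i => [|i IH]; first by rewrite expr1 expr0 mul1mx scale1r.
rewrite [x ^+ i.+2]exprS -mulmxE DrM IH scalemxAr mulmxA.
rewrite scalemxAr (inA_comm (DrA hx) (inA_exp i.+1 hx)).
rewrite -[x *m x ^+ i]/(x * x ^+ i) -exprS.
by rewrite -mulmxDr [i.+2%:R]mulrSr scalerDl scale1r addrC.
Qed.

Lemma iter_Dr0 k : iter k Dr 0 = 0.
Proof. by elim: k => //= k ->; rewrite Dr0. Qed.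

Lemma nilX_t : (1 <= t)%N -> (t <= m)%N -> exists k, X (inord t) ^+ k = 0.
Proof.
move=> t1 tm.
pose a := X (inord t.-1); pose b := X (inord t); pose N := (n * n)%N.
have ha : a ^+ N = 0.
  apply: nilX_ne; rewrite inordK; last by lia.
  by rewrite ht -!muln2; apply/eqP; lia.
have hAa : inA a by apply: inAX.
have hAb : inA b by apply: inAX.
have hDa : Dr a = b.
  rewrite /Dr relFX inordK; last by lia.
  have -> : (t.-1 < m)%N by lia.
  by rewrite prednK.
have ti : (inord t : 'I_m.+1) = t :> nat by rewrite inordK; lia.
have hDb : inJ (Dr b).
  rewrite /Dr relFX ti; case: ifP => tm'; last exact: inJ0.
  rewrite -[X _]mul1mx; apply: inJX; first exact: inA1.
  by rewrite inordK; lia.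
have claim k : (k <= N)%N -> exists j, inJ j /\
    iter k Dr (a ^+ N) = (N ^_ k)%:R *: (a ^+ (N - k) *m b ^+ k) + j.
  elim: k => [|k IH] kN.
    by exists 0; split; [exact: inJ0|rewrite expr0 mulmx1 subn0 addr0 scale1r].
  have [j [hj IHe]] := IH (ltnW kN).
  have e : (N - k)%N = (N - k.+1).+1 by lia.
  rewrite iterS IHe DrD DrZ DrM e.
  exists ((N ^_ k)%:R *: (a ^+ (N - k.+1).+1 *m Dr (b ^+ k)) + Dr j); split.
    apply: inJD; last exact: DrJ.
    rewrite scalemxAl; apply: inJ_M; first by apply: inAZ; apply: inA_exp.
    exact: DrJ_exp.
  rewrite Dexp // hDa -!scalemxAl scalerDr scalerA addrA; rewrite -[_ + j *m Fm - Fm *m j]addrA -/(Dr j) [in RHS]addrA; congr (_ + _ + _).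
  rewrite ffactnSr natrM e -mulmxA -[b *m b ^+ k]/(b * b ^+ k) -exprS.
  by rewrite mulrC.
have [j [hj]] := claim N (leqnn N).
rewrite ha iter_Dr0 subnn expr0 mul1mx ffactnn => /eqP.
rewrite eq_sym addr_eq0 => /eqP hbN.
have hJ : inJ (b ^+ N).
  have nz : (N`!)%:R != 0 :> F by rewrite ((pcharf0P F).1 hF) -lt0n fact_gt0.
  rewrite -[b ^+ N]scale1r -(mulVf nz) -scalerA hbN scalerN -scaleNr.
  rewrite -[j]mul1mx scalemxAl.
  apply: inJ_M; [apply: inAZ; exact: inA1 | exact: hj].
have [k hk] := inJ_nil hJ.
by exists (N * k)%N; rewrite exprM hk.
Qed.

End Nilp.


Lemma find_last (P : nat -> bool) k : ~~ P 0 -> P k -> exists i, ~~ P i /\ P i.+1.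
Proof.
elim: k => [|k IH] P0 Pk; first by rewrite Pk in P0.
case Pk' : (P k); first exact: IH.
by exists k; rewrite Pk'.
Qed.

Section Mod.
Variables (F : fieldType) (hF : [pchar F] =i pred0) (m : nat) (hm : (1 <= m)%N)
  (n : nat) (M : gmod F m n) (hM : is_gmod M).
Local Notation E := (gE M). Local Notation H := (gH M).
Local Notation Fm := (gF M). Local Notation X := (gX M).

Lemma nilX s : exists k, X s ^+ k = 0.
Proof.
case: (eqVneq m s.*2) => hs; last by exists (n * n)%N; apply: nilX_ne.
have hs' : m = (s * 2)%N by rewrite muln2.
have t1 : (1 <= s)%N by lia.
have tm : (s <= m)%N by lia.
have [k hk] := nilX_t hF hM hs t1 tm.
by exists k; rewrite -hk; congr (X _ ^+ _); apply: val_inj; rewrite /= inordK.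
Qed.

Definition pre (y S : 'M[F]_n) : 'M[F]_n := kermx (y *m cokermx S).

Lemma preP k (w : 'M[F]_(k, n)) y S : (w <= pre y S)%MS = (w *m y <= S)%MS.
Proof. by rewrite [RHS]submxE -mulmxA; apply/sub_kermxP/eqP. Qed.

Lemma stable_allP (As : seq 'M[F]_n) U :
  stable_all As U <-> (forall y, y \in As -> stablemx U y).
Proof. by split; [move/allP|move=> h; apply/allP]. Qed.

Lemma in_gmats y : y \in g_mats M ->
  [\/ y = E, y = H, y = Fm | exists s, y = X s].
Proof.
rewrite /g_mats /sl2_mats mem_cat !inE => /orP[/or3P[]/eqP->|]; try by constructor.
by case/mapP=> s _ ->; apply: Or44; exists s.
Qed.

Lemma gmatsX s : X s \in g_mats M.
Proof. by rewrite /g_mats mem_cat; apply/orP; right; apply: map_f; rewrite mem_enum. Qed.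
Lemma gmatsE : E \in g_mats M. Proof. by rewrite /g_mats mem_cat !inE eqxx. Qed.
Lemma gmatsH : H \in g_mats M. Proof. by rewrite /g_mats mem_cat !inE eqxx orbT. Qed.
Lemma gmatsF : Fm \in g_mats M. Proof. by rewrite /g_mats mem_cat !inE eqxx !orbT. Qed.
Lemma sl2_in y : y \in sl2_mats M -> y \in g_mats M.
Proof. by rewrite /g_mats mem_cat => ->. Qed.

Lemma comm_gen y s : y \in g_mats M -> exists (c : F) (s' : 'I_m.+1),
  y *m X s = X s *m y - c *: X s'.
Proof.
case/in_gmats => [->|->|->|[t ->]].
- by exists (s * (m - s).+1)%:R, (inord s.-1); rewrite -relEX // opprB addrC subrK.
- by exists (m%:R - (s.*2)%:R), s; rewrite -relHX // opprB addrC subrK.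
- have := relFX hM s; case: ifP => _ h.
    by exists 1, (inord s.+1); rewrite scale1r -h opprB addrC subrK.
  by exists 0, s; rewrite scale0r subr0; apply/eqP; rewrite eq_sym -subr_eq0 h.
- by exists 0, s; rewrite scale0r subr0 (relXX hM).
Qed.

Lemma stableX_exp (S : 'M[F]_n) s i : stablemx S (X s) -> stablemx S (X s ^+ i).
Proof.
move=> hS; elim: i => [|i IH]; first by rewrite expr0 mulmx1.
by rewrite exprSr -mulmxE mulmxA (submx_trans (submxMr _ IH)).
Qed.

Lemma commX_exp s s' i : X s ^+ i *m X s' = X s' *m X s ^+ i.
Proof. by apply: (inA_comm hM); [apply: inA_exp; apply: inAX|apply: inAX]. Qed.

Lemma L_triv (S T : 'M[F]_n) : stable_all (g_mats M) S ->
  simple_over (g_mats M) S T -> forall s, (T *m X s <= S)%MS.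
Proof.
move=> /stable_allP hS [/stable_allP hT ltST hmin].
have leST : (S <= T)%MS by move: ltST; rewrite ltmxE => /andP[].
pose Z := (T :&: \bigcap_(s < m.+1) pre (X s) S)%MS.
have ZP k (w : 'M_(k, n)) : (w <= Z)%MS = (w <= T)%MS && [forall s, w *m X s <= S]%MS.
  rewrite sub_capmx; congr (_ && _); apply/sub_bigcapmxP/forallP.
    by move=> h s; rewrite -preP; apply: h.
  by move=> h s _; rewrite preP; apply: h.
have stZ : stable_all (g_mats M) Z.
  apply/stable_allP => y hy.
  have ZT : (Z <= T)%MS by exact: capmxSl.
  rewrite ZP; apply/andP; split.
    apply: submx_trans (hT y hy); apply: submxMr; exact: capmxSl.
  apply/forallP => s; have [c [s' e]] := comm_gen s hy.
  have ZX s0 : (Z *m X s0 <= S)%MS.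
    by have := submx_refl Z; rewrite {1}ZP => /andP[_ /forallP].
  rewrite -mulmxA e mulmxBr; apply: addmx_sub; last first.
    by rewrite eqmx_opp -scalemxAr; apply: scalemx_sub; apply: ZX.
  by rewrite mulmxA (submx_trans (submxMr _ (ZX s))) // hS.
have SZ : (S <= Z)%MS.
  rewrite ZP leST; apply/forallP => s; exact: hS _ (gmatsX s).
have ZT : (Z <= T)%MS by exact: capmxSl.
case: (hmin Z stZ SZ ZT) => /andP[ZS TZ]; last first.
  by move=> s; have := TZ; rewrite ZP => /andP[_ /forallP]; apply.
have desc j : (j <= m.+1)%N -> exists w : 'rV_n, [/\ (w <= T)%MS, ~~ (w <= S)%MS &
    forall s : 'I_m.+1, (s < j)%N -> (w *m X s <= S)%MS].
  elim: j => [_|j IH hj].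
    move: ltST; rewrite ltmxE => /andP[_ /row_subPn [i hi]].
    by exists (row i T); split => //; rewrite row_sub.
  have [w [wT wS wX]] := IH (ltnW hj).
  pose s0 : 'I_m.+1 := Ordinal hj.
  have [k hk] := nilX s0.
  have P0 : ~~ (w *m X s0 ^+ 0 <= S)%MS by rewrite expr0 mulmx1.
  have Pk : (w *m X s0 ^+ k <= S)%MS by rewrite hk mulmx0 sub0mx.
  have [i [hi hi1]] := @find_last (fun i => (w *m X s0 ^+ i <= S)%MS) k P0 Pk.
  exists (w *m X s0 ^+ i); split => //.
    exact: submx_trans (submxMr _ wT) (stableX_exp _ (hT _ (gmatsX s0))).
  move=> s; rewrite ltnS leq_eqVlt => /orP[/eqP e|lt].
    have -> : s = s0 by apply: val_inj.
    by move: hi1; rewrite exprSr -mulmxE mulmxA.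
  rewrite -mulmxA commX_exp mulmxA.
  exact: submx_trans (submxMr _ (wX s lt)) (stableX_exp _ (hS _ (gmatsX s0))).
have [w [wT wS wX]] := desc m.+1 (leqnn _).
have wZ : (w <= Z)%MS by rewrite ZP wT; apply/forallP => s; apply: wX.
by rewrite (submx_trans wZ ZS) in wS.
Qed.

Lemma soc_stable soc : is_socle_series M soc ->
  forall k y, y \in g_mats M -> stablemx (soc k) y.
Proof.
case=> h0 hk; elim=> [|k IH] y hy.
  move/andP: h0 => [h0 _]; rewrite submx0 in h0.
  by rewrite (eqP h0) mul0mx sub0mx.
case: (hk k) => le sup lub.
rewrite -preP; apply: lub.
  by rewrite preP; exact: submx_trans (IH y hy) le.
move=> U hU; rewrite preP.
case: (hU) => /stable_allP stU _ _.
exact: submx_trans (stU y hy) (sup U hU).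
Qed.

Lemma soc_X soc : is_socle_series M soc ->
  forall k s, (soc k.+1 *m X s <= soc k)%MS.
Proof.
move=> hs k s; have := hs; case=> _ /(_ k) [le sup lub].
rewrite -preP; apply: lub.
  by rewrite preP; apply: soc_stable => //; apply: gmatsX.
move=> U hU; rewrite preP; apply: L_triv hU s.
by apply/stable_allP => y hy; apply: soc_stable.
Qed.

End Mod.


Definition Pj (F : fieldType) n l (U : nat -> 'M[F]_n) (i : nat) : 'M[F]_n :=
  proj_mx (U i) (\sum_(j < l.+1 | (j : nat) != i) U j)%MS.
Arguments Pj : simpl never.

Section Dec.
Variables (F : fieldType) (hF : [pchar F] =i pred0) (m : nat) (hm : (1 <= m)%N)
  (n : nat) (M : gmod F m n) (hM : is_gmod M).
Variables (l : nat) (a : nat -> nat) (U : nat -> 'M[F]_n).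
Hypothesis dU : socle_decomposition M l a U.
Local Notation E := (gE M). Local Notation H := (gH M).
Local Notation Fm := (gF M). Local Notation X := (gX M).
Local Notation P := (Pj l U).

Lemma cap0 i : (i <= l)%N -> (U i :&: \sum_(j < l.+1 | (j:nat) != i) U j)%MS = 0.
Proof.
move=> il; case: dU => _ dir _ _.
have := (mxdirect_sumsP dir) (inord i) isT; rewrite inordK //.
have -> : (\sum_(j : 'I_l.+1 | true && (j != inord i)) U j)%MS = (\sum_(j < l.+1 | (j:nat) != i) U j)%MS.
  apply: eq_bigl => j /=; case: (eqVneq j (inord i)) => [->|ne].
    by rewrite inordK ?eqxx.
  apply/esym/eqP => e; move/eqP: ne; apply; apply: val_inj; rewrite /= inordK //.
by [].
Qed.

Lemma P_id i k (w : 'M_(k, n)) : (i <= l)%N -> (w <= U i)%MS -> w *m P i = w.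
Proof. by move=> il h; apply: proj_mx_id; [apply: cap0|exact: h]. Qed.

Lemma P_0 i j k (w : 'M_(k, n)) : (i <= l)%N -> (j <= l)%N -> j != i ->
  (w <= U j)%MS -> w *m P i = 0.
Proof.
move=> il jl ji h; apply: proj_mx_0; first exact: cap0.
have jl' : (j < l.+1)%N by [].
exact: (submx_trans h (sumsmx_sup (Ordinal jl') ji (submx_refl _))).
Qed.

Lemma P_sub i k (w : 'M_(k, n)) : (w *m P i <= U i)%MS.
Proof. exact: proj_mx_sub. Qed.

Lemma P_subU i : (P i <= U i)%MS.
Proof. by rewrite -[P i]mul1mx P_sub. Qed.

Lemma P_sum : \sum_(i < l.+1) P i = 1%:M.
Proof.
case: dU => _ _ full _.
have : (1%:M <= \sum_(i < l.+1) U i)%MS by move/andP: full => [_ ->].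
case/sub_sumsmxP => u e.
have Pi (i : 'I_l.+1) : P i = u i *m U i.
  rewrite -[P i]mul1mx {1}e mulmx_suml (bigD1 i) // /= big1 ?addr0.
    by rewrite -mulmxA P_id // -ltnS.
  move=> j ji; rewrite -mulmxA (P_0 (j := j)).
  - by rewrite mulmx0.
  - by rewrite -ltnS.
  - by rewrite -ltnS.
  - by rewrite val_eqE.
  - exact: submx_refl.
by rewrite [RHS]e; apply: eq_bigr => i _; exact: Pi.
Qed.

Lemma P_mul i j : (i <= l)%N -> (j <= l)%N ->
  P i *m P j = if i == j then P i else 0.
Proof.
move=> il jl; case: eqP => [->|ne]; first by rewrite (P_id jl (P_subU j)).
apply: (P_0 (j := i)); [exact: jl|exact: il|apply/eqP; exact: ne|exact: P_subU].
Qed.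



Lemma stU j y : (j <= l)%N -> y \in sl2_mats M -> stablemx (U j) y.
Proof.
move=> jl hy; case: dU => irr _ _ _.
by case: (irr j jl) => [[/stable_allP st _ _] _]; apply: st.
Qed.

Lemma P_comm y i : y \in sl2_mats M -> (i <= l)%N -> y *m P i = P i *m y.
Proof.
move=> hy il.
have PyU j : (j <= l)%N -> (P j *m y <= U j)%MS.
  by move=> jl; exact: submx_trans (submxMr y (P_subU j)) (stU jl hy).
have ord : (i < l.+1)%N by [].
transitivity (P i *m y *m P i).
  rewrite -[y *m P i]mul1mx -P_sum mulmx_suml (bigD1 (Ordinal ord) isT) /=.
  rewrite big1 ?addr0; first by rewrite mulmxA.
  move=> j ji; rewrite mulmxA (P_0 (j := j)).
  - by [].
  - exact: il.
  - by rewrite -ltnS.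
  - by rewrite -val_eqE in ji.
  - by apply: PyU; rewrite -ltnS.
rewrite -[in RHS](mulmx1 (P i *m y)) -P_sum mulmx_sumr (bigD1 (Ordinal ord) isT) /=.
rewrite big1 ?addr0; first by [].
move=> j ji; rewrite (P_0 (j := i)).
- by [].
- by rewrite -ltnS.
- exact: il.
- by rewrite eq_sym -val_eqE in ji.
- exact: PyU.
Qed.

Lemma Uneq0 i : (i <= l)%N -> U i != 0.
Proof.
move=> il; case: dU => irr _ _ _; case: (irr i il) => _ r.
by rewrite -mxrank_eq0 r.
Qed.

Lemma partE i0 : (1 <= i0)%N -> (i0 <= l)%N ->
  ~ (forall s, U i0 *m X s *m P i0.-1 = 0).
Proof.
move=> i1 il hyp; have dU' := dU; case: dU' => irr dir full [soc [hsoc heq]].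
set k := i0.-1.
have ek : i0 = k.+1 by rewrite /k prednK.
have kl : (k <= l)%N by lia.
have socU j kk : (j < kk)%N -> (kk <= l.+1)%N -> (U j <= soc kk)%MS.
  move=> jk kkl; move/andP: (heq kk kkl) => [_ h]; apply: submx_trans h.
  exact: (sumsmx_sup (Ordinal jk) isT (submx_refl _)).
have soc0 kk j r (w : 'M_(r, n)) : (kk <= l.+1)%N -> (j <= l)%N -> (kk <= j)%N ->
    (w <= soc kk)%MS -> w *m P j = 0.
  move=> kkl jl kj /submx_trans /(_ (proj1 (andP (heq kk kkl)))) /sub_sumsmxP [u ->].
  rewrite mulmx_suml big1; first by [].
  move=> j' _; rewrite -mulmxA (P_0 (i := j) (j := j')).
  - by rewrite mulmx0.
  - exact: jl.
  - by have := ltn_ord j'; lia.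
  - by rewrite neq_ltn (leq_trans (ltn_ord j') kj).
  - exact: submx_refl.
have Uns : U i0 != 0 by apply: Uneq0.
have i0l : (i0 <= l.+1)%N by lia.
have notsoc : ~~ (U i0 <= soc i0)%MS.
  apply/negP => h; move: Uns; rewrite -(P_id il (submx_refl (U i0))).
  by rewrite (soc0 i0 i0 _ _ i0l il (leqnn _) h) eqxx.
have UXk s : (U i0 *m X s <= soc k)%MS.
  have UXs : (U i0 *m X s <= soc i0)%MS.
    have i0l' : (i0.+1 <= l.+1)%N by lia.
    apply: submx_trans (submxMr _ (socU i0 i0.+1 (ltnSn _) i0l')) _.
    have := soc_X hF hm hM hsoc i0 s. by [].
  rewrite -[U i0 *m X s]mulmx1 -P_sum mulmx_sumr; apply: summx_sub => j _.
  case: (ltnP j k) => jk.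
    have h1 := P_sub j (U i0 *m X s). have h2 : (U j <= soc k)%MS by apply: socU jk _; lia. exact: submx_trans h1 h2.
  case: (eqVneq (j : nat) k) => [e|jk'].
    by rewrite e hyp sub0mx.
  have hj : (j <= l)%N by rewrite -ltnS.
  have hij : (i0 <= j)%N by rewrite ek ltn_neqAle eq_sym jk' jk.
  by rewrite (soc0 i0 j _ _ i0l hj hij UXs) sub0mx.
have skst y : y \in g_mats M -> stablemx (soc k) y.
  by move=> hy; apply: soc_stable hsoc k y hy.
pose Z := (soc k + U i0)%MS.
have stZ : stable_all (g_mats M) Z.
  apply/stable_allP => y hy; rewrite /Z addsmxMr.
  have [e|] : y = E \/ y = H \/ y = Fm \/ (exists s, y = X s).
  - by case/in_gmats: hy; auto.
  - have hy' : y \in sl2_mats M by rewrite e /sl2_mats !inE eqxx.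
    by apply: addsmxS; [apply: skst|apply: stU].
  case=> [e|[e|[s ->]]].
  - have hy' : y \in sl2_mats M by rewrite e /sl2_mats !inE eqxx ?orbT.
    by apply: addsmxS; [apply: skst|apply: stU].
  - have hy' : y \in sl2_mats M by rewrite e /sl2_mats !inE eqxx ?orbT.
    by apply: addsmxS; [apply: skst|apply: stU].
  rewrite addsmx_sub; apply/andP; split; apply: submx_trans (addsmxSl _ _).
    by apply: skst; apply: gmatsX.
  exact: UXk.
have sksk1 : (soc k <= soc i0)%MS by rewrite ek; case: hsoc => _ /(_ k) [].
have simZ : simple_over (g_mats M) (soc k) Z.
  split; first exact: stZ.
    rewrite ltmxE addsmxSl /=; apply/negP => h.
    by move/negP: notsoc; apply; apply: submx_trans sksk1; apply: submx_trans h; apply: addsmxSr.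
  move=> W /stable_allP stW skW WZ.
  have [_ _ irrU] : simple_over (sl2_mats M) 0 (U i0) by case: (irr i0 il).
  have stC : stable_all (sl2_mats M) (U i0 :&: W)%MS.
    apply/stable_allP => y hy; rewrite sub_capmx; apply/andP; split.
      exact: submx_trans (submxMr _ (capmxSl _ _)) (stU il hy).
    exact: submx_trans (submxMr _ (capmxSr _ _)) (stW y (sl2_in hy)).
  have modl : (W :=: soc k + (U i0 :&: W))%MS.
    apply: eqmx_trans (eqmx_sym (capmx_idPr WZ)) _.
    exact: eqmx_sym (matrix_modl _ skW).
  case: (irrU _ stC (sub0mx _ _) (capmxSl _ _)) => /andP[h1 h2].
    left; apply/andP; split; last exact: skW.
    rewrite modl addsmx_sub submx_refl /=.
    exact: submx_trans h1 (sub0mx _ _).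
  right; apply/andP; split; first exact: WZ.
  by rewrite /Z addsmx_sub skW /=; apply: submx_trans h2 (capmxSr _ _).
have : (Z <= soc k.+1)%MS by case: hsoc => _ /(_ k) [_ sup _]; apply: sup.
rewrite -ek /Z addsmx_sub => /andP[_ h].
by move/negP: notsoc.
Qed.


Lemma partF i0 : (1 <= i0)%N -> (i0 <= l)%N -> forall u : 'rV[F]_n,
  (u <= U i0)%MS -> (forall s, u *m X s *m P i0.-1 = 0) -> u = 0.
Proof.
move=> i1 il u uU hu.
set k := i0.-1; have kl : (k <= l)%N by rewrite /k; lia.
pose K := (U i0 :&: \bigcap_(s < m.+1) kermx (X s *m P k))%MS.
have KP r (w : 'M_(r, n)) :
    (w <= K)%MS = (w <= U i0)%MS && [forall s, w *m X s *m P k == 0].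
  rewrite sub_capmx; congr (_ && _); apply/sub_bigcapmxP/forallP.
    by move=> h s; apply/eqP; rewrite -mulmxA; apply/sub_kermxP; apply: h.
  by move=> h s _; apply/sub_kermxP; rewrite mulmxA; apply/eqP; apply: h.
have KX s : K *m X s *m P k = 0.
  by have := submx_refl K; rewrite {1}KP => /andP[_ /forallP /(_ s) /eqP].
have stK : stable_all (sl2_mats M) K.
  apply/stable_allP => y hy; rewrite KP; apply/andP; split.
    exact: submx_trans (submxMr _ (capmxSl _ _)) (stU il hy).
  apply/forallP => s; have [c [s' e]] := comm_gen hM s (sl2_in hy).
  rewrite -[K *m y *m X s]mulmxA e mulmxBr mulmxBl.
  rewrite [K *m (X s *m y)]mulmxA -[K *m X s *m y *m P k]mulmxA (P_comm hy kl).
  rewrite mulmxA KX mul0mx.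
  by rewrite -scalemxAr -scalemxAl KX scaler0 subrr.
have dU' := dU; case: dU' => irr _ _ _.
have [_ _ irrU] : simple_over (sl2_mats M) 0 (U i0) by case: (irr i0 il).
case: (irrU _ stK (sub0mx _ _) (capmxSl _ _)) => /andP[h1 h2].
  have : (u <= K)%MS by rewrite KP uU; apply/forallP => s; apply/eqP; apply: hu.
  by move/submx_trans/(_ h1); rewrite submx0 => /eqP.
exfalso; apply: (partE i1 il) => s.
by have := submx_trans h2 (submx_refl K); rewrite KP => /andP[_ /forallP /(_ s) /eqP].
Qed.

End Dec.


Section Tens.
Variable F : fieldType.

Lemma sum_tens (V : nmodType) n p (f : 'I_(n * p) -> V) :
  \sum_k f k = \sum_(i < n) \sum_(j < p) f (@mxtens_index _ _ (i, j)).
Proof.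
rewrite pair_big /=.
apply: (reindex (fun q : 'I_n * 'I_p => @mxtens_index n p (q.1, q.2))).
exists (@mxtens_unindex n p) => q _ /=.
  by case: q => a b /=; rewrite mxtens_indexK.
exact: (@mxtens_unindexK n p q).
Qed.

Lemma sum_delta p (f : 'I_p -> F) j : \sum_(j2 < p) f j2 * (j2 == j)%:R = f j.
Proof.
rewrite (bigD1 j) // /= eqxx mulr1 big1 ?addr0 // => k /negbTE ->.
by rewrite mulr0.
Qed.

Lemma tensmxDl m n p q (A B : 'M[F]_(m, n)) (C : 'M[F]_(p, q)) :
  (A + B) *t C = A *t C + B *t C.
Proof. by apply/matrixP => i j; rewrite !mxE mulrDl. Qed.
Lemma tensmxDr m n p q (A : 'M[F]_(m, n)) (B C : 'M[F]_(p, q)) :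
  A *t (B + C) = A *t B + A *t C.
Proof. by apply/matrixP => i j; rewrite !mxE mulrDr. Qed.
Lemma tensmxNl m n p q (A : 'M[F]_(m, n)) (C : 'M[F]_(p, q)) :
  (- A) *t C = - (A *t C).
Proof. by apply/matrixP => i j; rewrite !mxE mulNr. Qed.

Lemma tensmx_suml m n p q k (A : 'I_k -> 'M[F]_(m, n)) (C : 'M[F]_(p, q)) :
  (\sum_(i < k) A i) *t C = \sum_(i < k) (A i *t C).
Proof.
elim: k A => [|k IH] A; first by rewrite !big_ord0 tens0mx.
by rewrite !big_ord_recr /= tensmxDl IH.
Qed.
Lemma tensmx_sumr m n p q k (A : 'M[F]_(m, n)) (C : 'I_k -> 'M[F]_(p, q)) :
  A *t (\sum_(i < k) C i) = \sum_(i < k) (A *t C i).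
Proof.
elim: k C => [|k IH] C; first by rewrite !big_ord0 tensmx0.
by rewrite !big_ord_recr /= tensmxDr IH.
Qed.

Lemma tens1 n p : (1%:M : 'M[F]_n) *t (1%:M : 'M[F]_p) = 1%:M.
Proof.
apply/matrixP => x y.
case: (mxtens_indexP x) => i1 i2; case: (mxtens_indexP y) => j1 j2.
rewrite tensmxE !mxE -natrM mulnb (can_eq (@mxtens_indexK n p)).
by rewrite xpair_eqE.
Qed.

Lemma tens_sub r n s p r' s' (A : 'M[F]_(r, n)) (B : 'M[F]_(s, p))
  (A' : 'M[F]_(r', n)) (B' : 'M[F]_(s', p)) :
  (A <= A')%MS -> (B <= B')%MS -> (A *t B <= A' *t B')%MS.
Proof.
move=> /submxP [D1 ->] /submxP [D2 ->].
by rewrite -tensmx_mul submxMl.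
Qed.

Definition slice_r n p (v : 'rV[F]_(n * p)) (j : 'I_p) : 'rV[F]_n :=
  \row_i v 0 (@mxtens_index _ _ (i, j)).
Definition slice_l n p (v : 'rV[F]_(n * p)) (i : 'I_n) : 'rV[F]_p :=
  \row_j v 0 (@mxtens_index _ _ (i, j)).

Lemma slice_r_mul n p (v : 'rV[F]_(n * p)) (M : 'M[F]_n) j :
  slice_r (v *m (M *t (1%:M : 'M_p))) j = slice_r v j *m M.
Proof.
apply/rowP => i'; rewrite !mxE sum_tens.
apply: eq_bigr => i _; rewrite !mxE.
under eq_bigr => j2 _ do rewrite tensmxE mxE mulrA.
by rewrite sum_delta.
Qed.

Lemma slice_l_mul n p (v : 'rV[F]_(n * p)) (M : 'M[F]_p) i :
  slice_l (v *m ((1%:M : 'M_n) *t M)) i = slice_l v i *m M.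
Proof.
apply/rowP => j'; rewrite !mxE sum_tens exchange_big /=.
apply: eq_bigr => j _; rewrite !mxE.
under eq_bigr => i2 _ do rewrite tensmxE mxE mulrCA mulrC.
by rewrite sum_delta.
Qed.

Lemma slice_r_sub r n s p (v : 'rV[F]_(n * p)) (A : 'M[F]_(r, n)) (B : 'M[F]_(s, p)) j :
  (v <= A *t B)%MS -> (slice_r v j <= A)%MS.
Proof.
case/submxP => D ->; apply/submxP.
exists (\row_a \sum_(b < s) D 0 (@mxtens_index _ _ (a, b)) * B b j).
apply/rowP => i; rewrite !mxE sum_tens; apply: eq_bigr => a _.
rewrite !mxE mulr_suml; apply: eq_bigr => b _.
by rewrite tensmxE mulrA mulrAC.
Qed.

Lemma slice_l_sub r n s p (v : 'rV[F]_(n * p)) (A : 'M[F]_(r, n)) (B : 'M[F]_(s, p)) i :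
  (v <= A *t B)%MS -> (slice_l v i <= B)%MS.
Proof.
case/submxP => D ->; apply/submxP.
exists (\row_b \sum_(a < r) D 0 (@mxtens_index _ _ (a, b)) * A a i).
apply/rowP => j; rewrite !mxE sum_tens exchange_big /=; apply: eq_bigr => b _.
rewrite !mxE mulr_suml; apply: eq_bigr => a _.
by rewrite tensmxE mulrA.
Qed.

Lemma slice_r_eq0 n p (v : 'rV[F]_(n * p)) : (forall j, slice_r v j = 0) -> v = 0.
Proof.
move=> h; apply/rowP => k; case: (mxtens_indexP k) => i j.
by have := congr1 (fun w : 'rV[F]_n => w 0 i) (h j); rewrite !mxE => ->.
Qed.

Lemma slice_l_eq0 n p (v : 'rV[F]_(n * p)) : (forall i, slice_l v i = 0) -> v = 0.
Proof.
move=> h; apply/rowP => k; case: (mxtens_indexP k) => i j.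
by have := congr1 (fun w : 'rV[F]_p => w 0 j) (h i); rewrite !mxE => ->.
Qed.

Lemma tens_inj_r r n s p q (A : 'M[F]_(r, n)) (B : 'M[F]_(s, p)) (Ms : 'I_q -> 'M[F]_n)
  (v : 'rV[F]_(n * p)) :
  (forall u : 'rV_n, (u <= A)%MS -> (forall t, u *m Ms t = 0) -> u = 0) ->
  (v <= A *t B)%MS -> (forall t, v *m (Ms t *t (1%:M : 'M_p)) = 0) -> v = 0.
Proof.
move=> hA vAB hv; apply: slice_r_eq0 => j; apply: hA.
  exact: slice_r_sub vAB.
by move=> t; rewrite -slice_r_mul hv; apply/rowP => i; rewrite !mxE.
Qed.

Lemma tens_inj_l r n s p q (A : 'M[F]_(r, n)) (B : 'M[F]_(s, p)) (Ms : 'I_q -> 'M[F]_p)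
  (v : 'rV[F]_(n * p)) :
  (forall u : 'rV_p, (u <= B)%MS -> (forall t, u *m Ms t = 0) -> u = 0) ->
  (v <= A *t B)%MS -> (forall t, v *m ((1%:M : 'M_n) *t Ms t) = 0) -> v = 0.
Proof.
move=> hB vAB hv; apply: slice_l_eq0 => i; apply: hB.
  exact: slice_l_sub vAB.
by move=> t; rewrite -slice_l_mul hv; apply/rowP => j; rewrite !mxE.
Qed.

End Tens.


Lemma tens_fix (F : fieldType) r n p (Y : 'M[F]_(r, n * p)) (A : 'M[F]_n) (B : 'M[F]_p)
  (R1 : 'M[F]_n) (R2 : 'M[F]_p) :
  (Y <= A *t B)%MS -> A *m R1 = A -> B *m R2 = B -> Y *m (R1 *t R2) = Y.
Proof.
by case/submxP => D ->; move=> h1 h2; rewrite -mulmxA tensmx_mul h1 h2.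
Qed.

Section Final.
Variables (F : fieldType) (m n p : nat) (V : gmod F m n) (W : gmod F m p).
Variables (l l' : nat) (a b : nat -> nat) (UV : nat -> 'M[F]_n) (UW : nat -> 'M[F]_p).
Hypotheses (dV : socle_decomposition V l a UV) (dW : socle_decomposition W l' b UW).
Local Notation PV := (Pj l UV).
Local Notation QW := (Pj l' UW).

Lemma tcompE i j x : (i <= l)%N -> (j <= l')%N ->
  tcomp l l' UV UW i j x = x *m (PV i *t QW j).
Proof.
move=> il jl; rewrite /tcomp il jl /=.
set A := UV i *t UW j.
set B := (\sum_(ij : 'I_l.+1 * 'I_l'.+1 | (ij.1 : nat, ij.2 : nat) != (i, j))
            (UV ij.1 *t UW ij.2))%MS.
set R := PV i *t QW j.
have AR r (Y : 'M_(r, n * p)) : (Y <= A)%MS -> Y *m R = Y.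
  move=> hY; apply: (tens_fix hY).
    by have := P_id dV il (submx_refl (UV i)).
  by have := P_id dW jl (submx_refl (UW j)).
have BR r (Y : 'M_(r, n * p)) : (Y <= B)%MS -> Y *m R = 0.
  case/sub_sumsmxP => u ->; rewrite mulmx_suml big1; first by [].
  move=> [a' b'] /= ne; rewrite -mulmxA tensmx_mul.
  have al : (a' <= l)%N by rewrite -ltnS.
  have bl : (b' <= l')%N by rewrite -ltnS.
  case: (eqVneq (a' : nat) i) => ea.
    have eb : (b' : nat) != j by move: ne; rewrite ea xpair_eqE eqxx.
    have := P_0 dW jl bl eb (submx_refl (UW b')) => ->.
    by rewrite tensmx0 mulmx0.
  have := P_0 dV il al ea (submx_refl (UV a')) => ->.
  by rewrite tens0mx mulmx0.
have cap : (A :&: B)%MS = 0.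
  have h1 := AR _ _ (capmxSl A B).
  have h2 := BR _ _ (capmxSr A B).
  by rewrite -h1 h2.
have Rsum : 1%:M - R =
    \sum_(ij : 'I_l.+1 * 'I_l'.+1 | (ij.1 : nat, ij.2 : nat) != (i, j))
      (PV ij.1 *t QW ij.2).
  have il' : (i < l.+1)%N by []. have jl' : (j < l'.+1)%N by [].
  rewrite -(tens1 F n p) -(P_sum dV) -(P_sum dW) tensmx_suml.
  under eq_bigr => i1 _ do rewrite tensmx_sumr.
  rewrite pair_big /= (bigD1 (Ordinal il', Ordinal jl') isT) /=.
  rewrite [X in X - R = _]addrC addrK.
  apply: eq_bigl => -[x1 x2] /=.
  by rewrite !xpair_eqE -!val_eqE.
have xR : (x *m R <= A)%MS.
  apply: submx_trans (submxMl _ _) _.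
  exact: tens_sub (P_subU l UV i) (P_subU l' UW j).
have xB : (x *m (1%:M - R) <= B)%MS.
  rewrite Rsum mulmx_sumr; apply: summx_sub => ab hab.
  apply: submx_trans (submxMl _ _) _.
  apply: submx_trans (tens_sub (P_subU l UV ab.1) (P_subU l' UW ab.2)) _.
  exact: (sumsmx_sup ab hab (submx_refl _)).
have ex : x = x *m R + x *m (1%:M - R) by rewrite mulmxBr mulmx1 addrC subrK.
by rewrite {1}ex mulmxDl (proj_mx_id cap xR) (proj_mx_0 cap xB) addr0.
Qed.
End Final.

Unset Implicit Arguments.
Theorem lemma3p1 (F : fieldType) (hF : [pchar F] =i pred0) (m : nat)
  (hm : (1 <= m)%N) (n p : nat) (V : gmod F m n) (W : gmod F m p)
  (hV : is_gmod V) (hW : is_gmod W) (uV : uniserial V) (uW : uniserial W)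
  (l l' : nat) (hl : (1 <= l)%N) (hl' : (1 <= l')%N)
  (a b : nat -> nat) (UV : nat -> 'M[F]_n) (UW : nat -> 'M[F]_p)
  (dV : socle_decomposition V l a UV) (dW : socle_decomposition W l' b UW)
  (i0 j0 : nat) (hi0 : (i0 <= l)%N) (hj0 : (j0 <= l')%N)
  (v0 : 'rV[F]_(n * p)) (hv0 : (v0 <= UV i0 *t UW j0)%MS)
  (hw : highest_weight (tens V W) v0) :
  (i0 = 0%N <-> forall s : 'I_m.+1,
      comp1 l l' UV UW i0 j0 (v0 *m gX (tens V W) s) = 0) /\
  (j0 = 0%N <-> forall s : 'I_m.+1,
      comp2 l l' UV UW i0 j0 (v0 *m gX (tens V W) s) = 0).
Proof.
have v0n : v0 != 0 by case: hw.
have vfix R1 R2 : UV i0 *m R1 = UV i0 -> UW j0 *m R2 = UW j0 ->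
    v0 *m (R1 *t R2) = v0.
  by move=> h1 h2; apply: (tens_fix hv0 h1 h2).
have PVi : UV i0 *m Pj l UV i0 = UV i0 by have := P_id dV hi0 (submx_refl (UV i0)).
have QWj : UW j0 *m Pj l' UW j0 = UW j0 by have := P_id dW hj0 (submx_refl (UW j0)).
have gXE s : gX (tens V W) s = gX V s *t 1%:M + 1%:M *t gX W s by [].
split.
  split => [e s|h]; first by rewrite e.
  case e: i0 => [//|k]; exfalso.
  have hk : (k <= l)%N by lia.
  move/negP: v0n; apply; apply/eqP.
  apply: (@tens_inj_r F n n p p m.+1 (UV i0) (UW j0)
     (fun s => gX V s *m Pj l UV k) v0 _ hv0).
    move=> u hu hs; apply: (partF hF hm hV dV (i0 := i0)) hu _.
    - by rewrite e.
    - exact: hi0.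
    - by move=> s; rewrite e /= -mulmxA; apply: hs.
  move=> s; have := h s; rewrite e /comp1 (tcompE dV dW _ hk hj0) gXE.
  rewrite mulmxDr mulmxDl -!mulmxA !tensmx_mul !mul1mx.
  have -> : v0 *m (Pj l UV k *t (gX W s *m Pj l' UW j0)) = 0.
    rewrite -[v0 in LHS](vfix _ _ PVi QWj) -mulmxA tensmx_mul.
    rewrite (P_mul dV hi0 hk).
    have -> : (i0 == k) = false by apply/negbTE; rewrite e neq_ltn ltnSn orbT.
    by rewrite tens0mx mulmx0.
  rewrite addr0 => <-.
  rewrite -[v0 in LHS](vfix 1%:M _ (mulmx1 _) QWj) -mulmxA tensmx_mul.
  by rewrite mul1mx mulmx1.
split => [e s|h]; first by rewrite e.
case e: j0 => [//|k]; exfalso.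
have hk : (k <= l')%N by lia.
move/negP: v0n; apply; apply/eqP.
apply: (@tens_inj_l F n n p p m.+1 (UV i0) (UW j0)
   (fun s => gX W s *m Pj l' UW k) v0 _ hv0).
  move=> u hu hs; apply: (partF hF hm hW dW (i0 := j0)) hu _.
  - by rewrite e.
  - exact: hj0.
  - by move=> s; rewrite e /= -mulmxA; apply: hs.
move=> s; have := h s; rewrite e /comp2 (tcompE dV dW _ hi0 hk) gXE.
rewrite mulmxDr mulmxDl -!mulmxA !tensmx_mul !mul1mx.
have -> : v0 *m ((gX V s *m Pj l UV i0) *t Pj l' UW k) = 0.
  rewrite -[v0 in LHS](vfix _ _ PVi QWj) -mulmxA tensmx_mul.
  rewrite (P_mul dW hj0 hk).
  have -> : (j0 == k) = false by apply/negbTE; rewrite e neq_ltn ltnSn orbT.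
  by rewrite tensmx0 mulmx0.
rewrite add0r => <-.
rewrite -[v0 in LHS](vfix _ 1%:M PVi (mulmx1 _)) -mulmxA tensmx_mul.
by rewrite mul1mx mulmx1.
Qed.
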